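(* Fix $d \geq 2$. If $c > 3/2$, then with high probability $Y \sim Y_d(n, \frac{c\log n}{n})$ has no inclusion-minimal $(d-1)$-cocycle of support size $k$ over any field, for any $\log n \leq k \leq n/(3d)$.
   Context: $Y_d(n,p)$ is the random $d$-dimensional simplicial complex on $n$ vertices with complete $(d-1)$-skeleton in which each $d$-face is included independently with probability $p$. ''With high probability'' means with probability tending to $1$ as $n\to\infty$. For a field $R$, a $(d-1)$-cochain $\phi$ over $R$ assigns values in $R$ to the oriented $(d-1)$-faces of the full simplex; it is a cocycle of $Y$ if $\delta\phi(\sigma) = 0$ for every $d$-face $\sigma$ of $Y$ ($\delta$ the simplicial coboundary). A nonzero cocycle $\phi$ over $R$ is inclusion-minimal if no nonzero cocycle of $Y$ over $R$ is supported on a proper subset of $\mathrm{supp}(\phi)$; its support size is $|\mathrm{supp}(\phi)|$. *)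

(* Defs.v *)
From HB Require Import structures.
From mathcomp Require Import all_boot all_order all_algebra.
From mathcomp Require Import all_classical all_reals all_analysis.
Set Implicit Arguments. Unset Strict Implicit. Unset Printing Implicit Defensive.
Import Order.TTheory GRing.Theory Num.Theory.
Local Open Scope ring_scope.

(* Vertices are 'I_n; a face is a subset of 'I_n.  A j-face has j+1 vertices. *)

Definition dfaces (n d : nat) : {set {set 'I_n}} := [set s : {set 'I_n} | #|s| == d.+1].

(* Sign of vertex v inside the face s (vertices ordered increasingly):
   the position of v in s is #|{u in s | u < v}|. *)
Definition pos_in (n : nat) (s : {set 'I_n}) (v : 'I_n) : nat :=
  #|[set u in s | (u < v)%N]|.

(* A (d-1)-cochain over F: value on each (d-1)-face (a set of d vertices),
   w.r.t. the increasing orientation; values on other sets are ignored. *)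
Definition cochain (F : fieldType) (n : nat) := {ffun {set 'I_n} -> F}.

(* Simplicial coboundary: (delta phi)(s) = sum_i (-1)^i phi(s \ v_i)
   with s = {v_0 < ... < v_d}. *)
Definition cobound (F : fieldType) (n : nat) (phi : cochain F n)
    (s : {set 'I_n}) : F :=
  \sum_(v in s) (-1) ^+ (pos_in s v) * phi (s :\ v).

Definition supp (F : fieldType) (n d : nat) (phi : cochain F n)
    : {set {set 'I_n}} :=
  [set f : {set 'I_n} | (#|f| == d) && (phi f != 0)].

(* phi is a (d-1)-cocycle of the d-complex Y (Y = set of its d-faces). *)
Definition is_cocycle (F : fieldType) (n : nat) (Y : {set {set 'I_n}})
    (phi : cochain F n) : Prop :=
  forall s, s \in Y -> cobound phi s = 0.

Definition minimal_cocycle (F : fieldType) (n d : nat) (Y : {set {set 'I_n}})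
    (phi : cochain F n) : Prop :=
  [/\ is_cocycle Y phi, supp d phi != finset.set0 &
      forall psi : cochain F n, is_cocycle Y psi -> supp d psi != finset.set0 ->
        ~ (supp d psi \proper supp d phi)].

(* Probability of an event (a property of Y) in Y_d(n,p): each d-face
   included independently with probability p. *)
Definition probY {R : realType} (n d : nat) (p : R)
    (E : {set {set 'I_n}} -> Prop) : R :=
  \sum_(Y : {set {set 'I_n}} | (Y \subset dfaces n d) && `[< E Y >])
     p ^+ #|Y| * (1 - p) ^+ (#|dfaces n d| - #|Y|).

Definition no_mid_minimal_cocycle {R : realType} (n d : nat)
    (Y : {set {set 'I_n}}) : Prop :=
  forall (F : fieldType) (phi : cochain F n),
    minimal_cocycle d Y phi ->
    ~ ((ln (n%:R : R) <= (#|supp d phi|)%:R) &&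
       ((#|supp d phi|)%:R <= (n%:R : R) / (3 * d)%:R)).

(* Main.v *)
Require Import Defs.
From HB Require Import structures.
From mathcomp Require Import all_boot all_order all_algebra.
From mathcomp Require Import all_classical all_reals all_analysis.
From mathcomp.algebra_tactics Require Import ring lra.
From mathcomp Require Import zify.
Import numFieldNormedType.Exports.
Import Order.TTheory GRing.Theory Num.Theory.
Set Implicit Arguments. Unset Strict Implicit. Unset Printing Implicit Defensive.
Local Open Scope ring_scope.


Section Weights.
Variables (R : comNzRingType) (V : finType).

Lemma prod_ident (D A B : {set V}) (x : R) :
  A \subset D -> B \subset D -> [disjoint A & B] ->
  \sum_(T : {set V} | [&& T \subset D, A \subset T & [disjoint T & B]])
     x ^+ #|T| * (1 - x) ^+ (#|D| - #|T|) = x ^+ #|A| * (1 - x) ^+ #|B|.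
Proof.
move=> AD BD dAB.
pose F i := if (i \in D) && (i \notin B) then x else 0.
pose G i := if i \in D then (if i \in A then 0 else 1 - x) else 1.
have H1 : \prod_i (F i + G i) = x ^+ #|A| * (1 - x) ^+ #|B|.
  rewrite -!prodr_const.
  rewrite (eq_bigr (fun i => (if i \in A then x else 1) * (if i \in B then 1 - x else 1))); last first.
    move=> i _; rewrite /F /G.
    case iA: (i \in A).
      have iD : i \in D := fintype.subsetP AD i iA.
      have -> : (i \in B) = false by apply: (disjointFr dAB).
      by rewrite iD /= addr0 mulr1.
    case iB: (i \in B).
      have iD : i \in D := fintype.subsetP BD i iB.
      by rewrite iD /= add0r mul1r.
    by case iD: (i \in D); rewrite /= ?add0r ?addr0 ?mul1r; rewrite ?subrK // addrC subrK.
  by rewrite big_split /=; congr (_ * _); rewrite [RHS]big_mkcond.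
rewrite -H1 bigA_distr.
rewrite [RHS](bigID (fun T : {set V} => [&& T \subset D, A \subset T & [disjoint T & B]])) /=.
rewrite [X in _ = _ + X]big1 ?addr0; last first.
  move=> T nc.
  have [i ti0] : exists i, (if i \in T then F i else G i) = 0.
    case TD: (T \subset D); last first.
      case/subsetPn: (negbT TD) => i iT niD.
      by exists i; rewrite iT /F (negPf niD).
    case AT: (A \subset T); last first.
      case/subsetPn: (negbT AT) => i iA niT.
      by exists i; rewrite (negPf niT) /G (fintype.subsetP AD _ iA) iA.
    have : ~~ [disjoint T & B] by move: nc; rewrite TD AT.
    rewrite -setI_eq0 => /set0Pn[i]; rewrite inE => /andP[iT iB].
    by exists i; rewrite iT /F iB andbF.
  by rewrite (bigD1 i) //= ti0 mul0r.
apply: eq_big => [T|T /and3P[TD AT dTB]]; first by [].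
have -> : (#|D| - #|T|)%N = #|D :\: T|.
  by rewrite cardsD (finset.setIidPr TD).
rewrite -!prodr_const [RHS](eq_bigr (fun i => (if i \in T then x else 1) * (if i \in D :\: T then 1 - x else 1))); last first.
  move=> i _; rewrite /F /G inE.
  case iT: (i \in T) => /=.
    by rewrite (fintype.subsetP TD _ iT) (disjointFr dTB iT) mulr1.
  case iD: (i \in D) => //=; last by rewrite mulr1.
  case iA: (i \in A) => //=; last by rewrite mul1r.
  by rewrite (fintype.subsetP AT _ iA) in iT.
by rewrite big_split /=; congr (_ * _); rewrite [LHS]big_mkcond.
Qed.
End Weights.



Section Perc.
Variables (R : realFieldType) (V : finType) (e : rel V).

Definition eS (S : {set V}) : rel V := fun a b => e a b && (b \in S).
Definition conn (v : V) (S : {set V}) : bool := [forall u in S, connect (eS S) v u].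
Definition nbd (S : {set V}) : {set V} := [set u | (u \notin S) && [exists w in S, e w u]].

Lemma conn_unique v (S1 S2 T : {set V}) : v \in S2 -> conn v S1 -> S1 \subset T ->
  [disjoint T & nbd S2] -> S1 \subset S2.
Proof.
move=> vS2 c1 S1T dT.
apply/fintype.subsetP => u uS1.
move/forall_inP: c1 => /(_ u uS1) /connectP [p pth ->].
elim: p v vS2 pth => [|b p IH] a aS2 //= /andP[/andP[eab bS1] pth].
apply: IH pth.
apply/negPn/negP => nb.
have bT : b \in T := fintype.subsetP S1T b bS1.
have : b \in nbd S2.
  by rewrite inE nb /=; apply/existsP; exists a; rewrite aS2 eab.
by rewrite (disjointFr dT bT).
Qed.

Lemma disj_nbd (S : {set V}) : [disjoint S & nbd S].
Proof.
rewrite -setI_eq0; apply/eqP/setP => u; rewrite !inE.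
by case: (u \in S).
Qed.

Lemma perc v (x : R) : 0 <= x <= 1 ->
  \sum_(S : {set V} | (v \in S) && conn v S) x ^+ #|S| * (1 - x) ^+ #|nbd S| <= 1.
Proof.
case/andP=> x0 x1.
have wt0 : forall T : {set V}, 0 <= x ^+ #|T| * (1 - x) ^+ (#|[set: V]| - #|T|).
  by move=> T; rewrite mulr_ge0 // exprn_ge0 // subr_ge0.
rewrite (eq_bigr (fun S : {set V} => \sum_(T : {set V})
     (if [&& T \subset [set: V], S \subset T & [disjoint T & nbd S]] then
      x ^+ #|T| * (1 - x) ^+ (#|[set: V]| - #|T|) else 0))); last first.
  move=> S _; rewrite -big_mkcond /= prod_ident //; try exact: finset.subsetT; exact: disj_nbd.
rewrite exchange_big /=.
apply: (@le_trans _ _ (\sum_(T : {set V}) x ^+ #|T| * (1 - x) ^+ (#|[set: V]| - #|T|))).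
  apply: ler_sum => T _.
  rewrite -big_mkcondr /= sumr_const.
  have : (#|[pred S : {set V} | ((v \in S) && conn v S) && [&& T \subset [set: V], S \subset T & [disjoint T & nbd S]]]| <= 1)%N.
    apply/card_le1_eqP => S1 S2; rewrite !inE.
    move=> /andP[/andP[vS1 c1] /and3P[_ S1T d1]] /andP[/andP[vS2 c2] /and3P[_ S2T d2]].
    apply/eqP; rewrite finset.eqEsubset; apply/andP; split.
      exact: (conn_unique vS1 c2 S2T d1).
    exact: (conn_unique vS2 c1 S1T d2).
  have aux : forall (m : nat) (w : R), 0 <= w -> (m <= 1)%N -> w *+ m <= w.
    by move=> [|[|]] w //= w0 _; rewrite ?mulr0n ?mulr1n.
  exact: aux.
rewrite (eq_bigl (fun T : {set V} => [&& T \subset [set: V], finset.set0 \subset T & [disjoint T & finset.set0]])); last first.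
  by move=> T /=; rewrite finset.subsetT finset.sub0set -setI_eq0 finset.setI0 eqxx.
rewrite prod_ident ?cards0 ?expr0 ?mulr1 //; try exact: finset.sub0set; by rewrite -setI_eq0 finset.setI0.
Qed.
End Perc.


Lemma card_bigcup_le (I T : finType) (P : pred I) (F : I -> {set T}) :
  (#|\bigcup_(i | P i) F i| <= \sum_(i | P i) #|F i|)%N.
Proof.
elim/big_rec2: _ => [|i B m _ IH]; first by rewrite cards0.
by rewrite (leq_trans (leq_card_setU _ _).1) // leq_add2l.
Qed.

Section Simp.
Variables (n d : nat).
Notation V := {set 'I_n}.

Definition nbr (w : V) : {set V} :=
  [set (w :\ fv.1) :|: [set fv.2] | fv in finset.setX w [set: 'I_n]].
Definition adj : rel V := fun w g => g \in nbr w.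

Lemma card_nbr w : (#|nbr w| <= #|w| * n)%N.
Proof.
by rewrite (leq_trans (leq_imset_card _ _)) // cardsX cardsT card_ord.
Qed.

Lemma card_nbd (S : {set V}) : (forall f, f \in S -> #|f| = d) ->
  (#|nbd adj S| <= #|S| * (d * n))%N.
Proof.
move=> Sd.
have sub : nbd adj S \subset \bigcup_(w in S) nbr w.
  apply/fintype.subsetP => u; rewrite inE => /andP[_ /existsP[w /andP[wS ewu]]].
  by apply/bigcupP; exists w.
rewrite (leq_trans (subset_leq_card sub)) // (leq_trans (card_bigcup_le _ _)) //.
rewrite -sum_nat_const leq_sum // => w wS.
by rewrite -(Sd w wS) card_nbr.
Qed.

Lemma adj_face (s : V) u0 u : u0 \in s -> u \in s -> u != u0 -> adj (s :\ u0) (s :\ u).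
Proof.
move=> u0s us neq; apply/imsetP; exists (u, u0).
  by rewrite inE /= !inE neq us.
apply/setP => x /=; rewrite !inE.
case: (eqVneq x u0) => [->|xu0] /=; first by rewrite eq_sym neq u0s.
by rewrite orbF.
Qed.

Definition VS (S : {set V}) : {set 'I_n} := \bigcup_(f in S) f.
Definition Bset (S : {set V}) : {set V} :=
  [set fv.1 :|: [set fv.2] | fv in finset.setX S (~: VS S)].

Lemma card_Bset (S : {set V}) : (forall f, f \in S -> #|f| = d) ->
  (#|S| * (n - #|S| * d) <= #|Bset S|)%N.
Proof.
move=> Sd.
rewrite /Bset card_in_imset; last first.
  move=> [f v] [f' v']; rewrite !inE /= => /andP[fS vV] /andP[f'S v'V] eq.
  have key : forall g w, g \in S -> w \notin VS S -> g = (g :|: [set w]) :&: VS S.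
    move=> g w gS wV; apply/setP => x; rewrite !inE.
    case xg: (x \in g) => /=.
      by apply/esym/bigcupP; exists g.
    by case: eqP => // ->; rewrite (negPf wV).
  have ff' : f = f' by rewrite (key f v fS vV) eq -(key f' v' f'S v'V).
  subst f'; congr pair.
  have : v \in f :|: [set v'] by rewrite -eq !inE eqxx orbT.
  rewrite !inE => /orP[vf|/eqP //].
  by move: vV; rewrite (_ : v \in VS S) //; apply/bigcupP; exists f.
rewrite cardsX leq_mul2l; apply/orP; right.
have := cardsC (VS S); rewrite card_ord => h.
have -> : #|~: VS S| = (n - #|VS S|)%N by move: h; lia.
rewrite leq_sub2l // (leq_trans (card_bigcup_le _ _)) //.
by rewrite -sum_nat_const; apply: leq_sum => f fS; rewrite Sd.
Qed.

Lemma in_VS (S : {set V}) f x : f \in S -> x \in f -> x \in VS S.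
Proof. by move=> fS xf; apply/bigcupP; exists f. Qed.

Lemma Bset_sub (S : {set V}) : (forall f, f \in S -> #|f| = d) ->
  Bset S \subset dfaces n d.
Proof.
move=> Sd; apply/fintype.subsetP => s /imsetP[[f v]]; rewrite !inE /= => /andP[fS vV] ->.
have vf : v \notin f by apply/negP => vf; move: vV; rewrite (in_VS fS vf).
by rewrite finset.setUC cardsU1 vf Sd.
Qed.

Lemma cocycle_avoid (F : fieldType) (Y : {set V}) (phi : cochain F n) :
  is_cocycle Y phi -> [disjoint Y & Bset (supp d phi)].
Proof.
move=> cyc; rewrite -setI_eq0; apply/eqP/setP => s; rewrite !inE.
apply/negP => /andP[sY /imsetP[[f v]]]; rewrite !inE /= => /andP[fS vV] sE.
have fS1 : f \in supp d phi by rewrite /supp inE.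
case/andP: fS => /eqP fd phif.
have vf : v \notin f by apply/negP => vf; move: vV; rewrite (in_VS fS1 vf).
have vs : v \in s by rewrite sE !inE eqxx orbT.
have cs : #|s| = d.+1 by rewrite sE finset.setUC cardsU1 vf fd.
have := cyc s sY; rewrite /cobound (bigD1 v) //=.
have -> : s :\ v = f.
  apply/setP => x; rewrite sE !inE.
  by case: (eqVneq x v) => [->|] /=; rewrite ?(negPf vf) ?orbF.
rewrite big1 ?addr0; last first.
  move=> u /andP[us uv].
  case: (eqVneq (phi (s :\ u)) 0) => [->|nz]; first by rewrite mulr0.
  exfalso.
  have : s :\ u \in supp d phi.
    rewrite /supp inE nz andbT; apply/eqP.
    by move: (cardsD1 u s); rewrite us cs add1n => -[].
  move/in_VS => /(_ v); rewrite !inE eq_sym uv vs => /(_ isT).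
  by rewrite (negPf vV).
move/eqP; rewrite mulf_eq0 (negPf phif) orbF expf_eq0 oppr_eq0 oner_eq0 andbF.
by [].
Qed.

Lemma minimal_conn (F : fieldType) (Y : {set V}) (phi : cochain F n) f0 :
  Y \subset dfaces n d -> minimal_cocycle d Y phi -> f0 \in supp d phi ->
  conn adj f0 (supp d phi).
Proof.
move=> Yd [cyc nz minl] f0S.
set S := supp d phi.
set S1 := [set g in S | connect (eS adj S) f0 g].
pose psi : cochain F n := [ffun g => if g \in S1 then phi g else 0].
have S1S : S1 \subset S by apply/fintype.subsetP => g; rewrite inE => /andP[].
have suppS1 : supp d psi = S1.
  apply/setP => g; rewrite /supp inE ffunE.
  case gS1: (g \in S1); last by rewrite eqxx andbF.
  have := fintype.subsetP S1S g gS1.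
  by rewrite /S /supp inE.
have cycpsi : is_cocycle Y psi.
  move=> s sY.
  have cs : #|s| = d.+1.
    by have := fintype.subsetP Yd s sY; rewrite inE => /eqP.
  rewrite /cobound.
  case: (boolP [exists u in s, s :\ u \in S1]) => [/exists_inP[u0 u0s h0]|none].
    rewrite -[RHS](cyc s sY) /cobound; apply: eq_bigr => u us; congr (_ * _).
    rewrite ffunE; case: ifP => // notin.
    case: (eqVneq (phi (s :\ u)) 0) => [->//|nz'].
    exfalso.
    have uS : s :\ u \in S.
      rewrite /S /supp inE nz' andbT; apply/eqP.
      by move: (cardsD1 u s); rewrite us cs add1n => -[].
    have uu0 : u != u0.
      by apply/negP => /eqP equ; move: h0 notin; rewrite equ => ->.
    move: notin; rewrite inE uS /= => /negP; apply.
    move: h0; rewrite inE => /andP[_ c0].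
    apply: (connect_trans c0); apply: connect1.
    by rewrite /eS /= uS andbT; apply: adj_face.
  apply: big1 => u us; rewrite ffunE; case: ifP => [h|]; last by rewrite mulr0.
  by case/negP: none; apply/exists_inP; exists u.
have nzpsi : supp d psi != finset.set0.
  by rewrite suppS1; apply/set0Pn; exists f0; rewrite inE f0S connect0.
have := minl psi cycpsi nzpsi; rewrite suppS1 => np.
apply/forall_inP => g gS.
apply/negPn/negP => ng; apply: np.
rewrite properE S1S /=; apply/negP => /fintype.subsetP /(_ g gS).
by rewrite inE gS /= (negPf ng).
Qed.
End Simp.


Lemma bernoulli_ineq (R : realFieldType) (x : R) (m : nat) :
  0 <= x <= 1 -> 1 - m%:R * x <= (1 - x) ^+ m.
Proof.
case/andP => x0 x1; elim: m => [|m IH]; first by rewrite mul0r subr0 expr0.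
rewrite exprS.
apply: (@le_trans _ _ ((1 - x) * (1 - m%:R * x))).
  have hm : 0 <= m%:R :> R by [].
  rewrite -natr1; nra.
by apply: ler_wpM2l; [rewrite subr_ge0 | exact IH].
Qed.

Lemma key_bound (R : realType) (n d k Bc Nc : nat) (c : R) :
  (2 <= d)%N -> (1 <= n)%N ->
  0 <= c * ln (n%:R : R) / n%:R <= 1 ->
  d%:R + 2 <= (2 * c / 3 - 1) * ln (n%:R : R) - ln (4 * d%:R) ->
  ln (n%:R : R) <= k%:R -> (k%:R : R) <= n%:R / (3 * d)%:R ->
  (k * (n - k * d) <= Bc)%N -> (Nc <= k * (d * n))%N ->
  (1 - c * ln (n%:R : R) / n%:R) ^+ Bc <=
    (n%:R^-1) ^+ (d + 2) * ((2 * d * n)%:R^-1 ^+ k * (1 - (2 * d * n)%:R^-1) ^+ Nc).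
Proof.
move=> d2 n1 /andP[p0 p1] H3 Lk kn hB hN.
set L := ln (n%:R : R).
set p := c * L / n%:R.
set x := (2 * d * n)%:R^-1 : R.
have dpos : (0 < d)%N by lia.
have npos : (0 < n)%N by lia.
have n0 : (0 : R) < n%:R by rewrite ltr0n.
have d0 : (0 : R) < d%:R by rewrite ltr0n.
have L0 : 0 <= L by rewrite /L ln_ge0 // ler1n.
have k0 : (0 : R) <= k%:R by [].
have x0 : 0 < x by rewrite /x invr_gt0 ltr0n !muln_gt0 dpos npos.
have xdn : x * (d * n)%:R = 2^-1.
  rewrite /x -mulnA natrM invfM -mulrA mulVf ?mulr1 //.
  by rewrite pnatr_eq0 muln_eq0 negb_or -!lt0n dpos npos.
have x1 : x <= 1.
  by rewrite /x invf_le1 ?ltr0n ?ler1n ?muln_gt0 ?dpos ?npos.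
have kd : ((k * d)%:R : R) <= n%:R / 3.
  rewrite natrM.
  move: kn; rewrite natrM ler_pdivlMr ?mulr_gt0 // => kn.
  by rewrite ler_pdivlMr // -mulrA (mulrC d%:R).
have kdn : (k * d <= n)%N.
  by rewrite -(ler_nat R); apply: (le_trans kd); rewrite ler_pdivrMr // ler_peMr // ler1n.
have s1 : (1 - p) ^+ Bc <= expR (- (p * (k * (n - k * d))%:R)).
  apply: (@le_trans _ _ ((1 - p) ^+ (k * (n - k * d)))).
    by apply: ler_wiXn2l => //; rewrite ?subr_ge0 // gerBl.
  rewrite [X in expR X](_ : _ = (- p) * (k * (n - k * d))%:R); last by rewrite mulNr.
  rewrite expRM_natr.
  apply: lerXn2r; rewrite ?nnegrE ?subr_ge0 ?expR_ge0 //.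
  exact: expR_ge1Dx.
apply: (le_trans s1).
set A := ln (4 * d%:R : R).
have y0 : 0 < 4 * d%:R * n%:R :> R by rewrite !mulr_gt0.
have lny : ln (4 * d%:R * n%:R) = A + L by rewrite lnM ?posrE // mulr_gt0.
have xhalf : x / 2 = (4 * d%:R * n%:R)^-1.
  by rewrite /x !natrM; field; rewrite (lt0r_neq0 n0) (lt0r_neq0 d0).
have en : n%:R^-1 = expR (- L) by rewrite expRN lnK ?posrE.
have ex : x / 2 = expR (- (A + L)) by rewrite expRN -lny lnK ?posrE // xhalf.
have bern : 2^-1 <= (1 - x) ^+ (d * n).
  have b := @bernoulli_ineq R x (d * n).
  rewrite mulrC xdn in b.
  apply: le_trans (b _); last by rewrite (ltW x0) x1.
  lra.
have R1 : (x / 2) ^+ k <= x ^+ k * (1 - x) ^+ Nc.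
  apply: (@le_trans _ _ (x ^+ k * (1 - x) ^+ (k * (d * n)))); last first.
    by apply: ler_wpM2l; [rewrite exprn_ge0 // ltW | apply: ler_wiXn2l => //; rewrite ?subr_ge0 // gerBl ltW].
  rewrite exprMn mulnC exprM; apply: ler_wpM2l; first by rewrite exprn_ge0 // ltW.
  by apply: lerXn2r; rewrite ?nnegrE ?invr_ge0 ?exprn_ge0 ?subr_ge0 // ler0n.
have R2 : n%:R^-1 ^+ (d + 2) * (x / 2) ^+ k <= n%:R^-1 ^+ (d + 2) * (x ^+ k * (1 - x) ^+ Nc).
  by apply: ler_wpM2l => //; rewrite exprn_ge0 // invr_ge0 ltW.
apply: le_trans R2.
rewrite ex en -!expRM_natr -expRD ler_expR.
have pn : p * n%:R = c * L by rewrite /p divfK // lt0r_neq0.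
have e1 : ((k * (n - k * d))%:R : R) = k%:R * (n%:R - k%:R * d%:R) by rewrite natrM natrB // natrM.
have e2 : (k%:R : R) * d%:R <= n%:R / 3 by rewrite -natrM.
rewrite e1 natrD.
have pp : 0 <= p by [].
have hx : 0 <= n%:R - k%:R * d%:R - 2 / 3 * n%:R :> R by lra.
have h1 := mulr_ge0 (mulr_ge0 pp k0) hx.
have h2 : p * k%:R * n%:R = c * L * k%:R by rewrite mulrAC pn.
have h3 : k%:R * (d%:R + 2) <= k%:R * ((2 * c / 3 - 1) * L - A) by apply: ler_wpM2l.
have h4 : L * (d%:R + 2) <= k%:R * (d%:R + 2) by apply: ler_wpM2r => //; lra.
nra.
Qed.


Lemma sum_ge_term (R : numDomainType) (I : finType) (P : pred I) (F : I -> R) i :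
  P i -> (forall j, P j -> 0 <= F j) -> F i <= \sum_(j | P j) F j.
Proof.
move=> Pi F0; rewrite (bigD1 i) //= lerDl sumr_ge0 // => j /andP[Pj _]; exact: F0.
Qed.

Section Main.
Variables (R : realType) (n d : nat) (c : R).

Definition good (f0 : {set 'I_n}) (S : {set {set 'I_n}}) : bool :=
  [&& f0 \in S, S \subset [set f : {set 'I_n} | #|f| == d], conn (@adj n) f0 S,
      ln (n%:R : R) <= (#|S|)%:R & ((#|S|)%:R : R) <= (n%:R : R) / (3 * d)%:R].

Lemma no_witness_nomid (Y : {set {set 'I_n}}) : Y \subset dfaces n d ->
  (forall f0 S, good f0 S -> ~~ [disjoint Y & Bset S]) ->
  @no_mid_minimal_cocycle R n d Y.
Proof.
move=> YD H F phi mc range.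
have mc' := mc; case: mc' => [cyc nz _].
case/set0Pn: nz => f0 f0S.
have hg : good f0 (supp d phi).
  rewrite /good f0S (minimal_conn YD mc f0S) range !andbT /=.
  by apply/fintype.subsetP => g; rewrite /supp !inE => /andP[-> _].
by move: (H _ _ hg); rewrite (cocycle_avoid d cyc).
Qed.

Lemma main_bound :
  (2 <= d)%N -> (1 <= n)%N ->
  0 <= c * ln (n%:R : R) / n%:R <= 1 ->
  d%:R + 2 <= (2 * c / 3 - 1) * ln (n%:R : R) - ln (4 * d%:R) ->
  1 - ('C(n, d))%:R * (n%:R^-1) ^+ (d + 2) <=
    @probY R n d (c * ln (n%:R : R) / n%:R) (@no_mid_minimal_cocycle R n d) <= 1.
Proof.
move=> d2 n1 /andP[p0 p1] H3.
rewrite /probY.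
set p := c * ln (n%:R : R) / n%:R.
set E := @no_mid_minimal_cocycle R n d.
set D := dfaces n d.
pose w := fun Y : {set {set 'I_n}} => p ^+ #|Y| * (1 - p) ^+ (#|D| - #|Y|).
have w0 : forall Y, 0 <= w Y by move=> Y; rewrite /w mulr_ge0 // exprn_ge0 // subr_ge0.
have tot : \sum_(Y : {set {set 'I_n}} | Y \subset D) w Y = 1.
  rewrite (eq_bigl (fun Y : {set {set 'I_n}} => [&& Y \subset D, finset.set0 \subset Y & [disjoint Y & finset.set0]])); last first.
    by move=> Y /=; rewrite finset.sub0set -setI_eq0 finset.setI0 eqxx !andbT.
  rewrite prod_ident ?cards0 ?expr0 ?mulr1 //; try exact: finset.sub0set; by rewrite -setI_eq0 finset.setI0.
have spl : \sum_(Y : {set {set 'I_n}} | Y \subset D) w Y =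
   \sum_(Y : {set {set 'I_n}} | (Y \subset D) && `[< E Y >]) w Y +
   \sum_(Y : {set {set 'I_n}} | (Y \subset D) && ~~ `[< E Y >]) w Y by apply: bigID.
rewrite tot in spl.
change (1 - ('C(n, d))%:R * (n%:R^-1) ^+ (d + 2) <= \sum_(Y : {set {set 'I_n}} | (Y \subset D) && `[< E Y >]) w Y <= 1).
move: spl.
set Good := \sum_(Y : {set {set 'I_n}} | (Y \subset D) && `[< E Y >]) w Y.
set Bad := \sum_(Y : {set {set 'I_n}} | (Y \subset D) && ~~ `[< E Y >]) w Y.
move=> spl.
have Bad0 : 0 <= Bad by rewrite sumr_ge0.
suff Badle : Bad <= ('C(n, d))%:R * (n%:R^-1) ^+ (d + 2).
  by apply/andP; split; lra.
pose x : R := (2 * d * n)%:R^-1.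
pose wp := fun S : {set {set 'I_n}} => x ^+ #|S| * (1 - x) ^+ #|nbd (@adj n) S|.
pose K : R := (n%:R^-1) ^+ (d + 2).
have dpos : (0 < d)%N by lia.
have npos : (0 < n)%N by lia.
have x0 : 0 <= x by rewrite invr_ge0 ler0n.
have x1 : x <= 1 by rewrite /x invf_le1 ?ltr0n ?ler1n ?muln_gt0 ?dpos ?npos.
have wp0 : forall S, 0 <= wp S by move=> S; rewrite /wp mulr_ge0 // exprn_ge0 // subr_ge0.
have K0 : 0 <= K by rewrite exprn_ge0 // invr_ge0.
rewrite /Bad big_mkcondr /=.
apply: (@le_trans _ _ (\sum_(Y : {set {set 'I_n}} | Y \subset D)
     \sum_(f0 : {set 'I_n} | #|f0| == d) \sum_(S : {set {set 'I_n}} | good f0 S)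
        (if [disjoint Y & Bset S] then w Y else 0))).
  apply: ler_sum => Y YD.
  have nn : forall f0, 0 <= \sum_(S : {set {set 'I_n}} | good f0 S) (if [disjoint Y & Bset S] then w Y else 0).
    by move=> f0; apply: sumr_ge0 => S _; case: ifP.
  case: ifP => [bad|_]; last by apply: sumr_ge0.
  case: (boolP [exists f0 : {set 'I_n}, exists S : {set {set 'I_n}}, good f0 S && [disjoint Y & Bset S]]).
    case/existsP => f0 /existsP[S /andP[gS dS]].
    have f0d : #|f0| == d.
      by case/and5P: gS => f0S /fintype.subsetP/(_ f0 f0S); rewrite inE.
    apply: (le_trans _ (sum_ge_term f0d (fun j _ => nn j))).
    apply: (le_trans _ (sum_ge_term gS _)); first by rewrite dS.
    by move=> S' _; case: ifP.
  move=> nw; exfalso; move/negP: bad; apply; apply/asboolP.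
  apply: no_witness_nomid => // f0 S gS; apply/negP => dS.
  by case/negP: nw; apply/existsP; exists f0; apply/existsP; exists S; rewrite gS dS.
rewrite exchange_big /=.
apply: (@le_trans _ _ (\sum_(f0 : {set 'I_n} | #|f0| == d) K)); last first.
  rewrite sumr_const -cardsE card_draws card_ord mulr_natl.
  by [].
apply: ler_sum => f0 _.
rewrite exchange_big /=.
apply: (@le_trans _ _ (\sum_(S : {set {set 'I_n}} | good f0 S) K * wp S)).
  apply: ler_sum => S gS.
  rewrite -big_mkcondr /=.
  case/and5P: gS => f0S Sd cS Lk kn.
  have Sd' : forall f, f \in S -> #|f| = d.
    by move=> f fS; move/fintype.subsetP: Sd => /(_ f fS); rewrite inE => /eqP.
  rewrite (eq_bigl (fun Y : {set {set 'I_n}} => [&& Y \subset D, finset.set0 \subset Y & [disjoint Y & Bset S]])); last first.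
    by move=> Y /=; rewrite finset.sub0set.
  rewrite prod_ident ?cards0 ?expr0 ?mul1r; last first.
  - by rewrite -setI_eq0 finset.set0I.
  - exact: Bset_sub.
  - exact: finset.sub0set.
  apply: key_bound => //; [by rewrite p0 p1 | exact: card_Bset | exact: card_nbd].
rewrite -mulr_sumr; apply: ler_piMr => //.
apply: (@le_trans _ _ (\sum_(S : {set {set 'I_n}} | (f0 \in S) && conn (@adj n) f0 S) wp S)); last first.
  by apply: perc; rewrite x0 x1.
rewrite [X in X <= _]big_mkcond [X in _ <= X]big_mkcond /=.
apply: ler_sum => S _.
case gS: (good f0 S); last by case: ifP.
by case/and5P: gS => -> _ -> _ _.
Qed.
End Main.

Lemma bin_le_exp n m : ('C(n, m) <= n ^ m)%N.
Proof.
apply: (@leq_trans ('C(n, m) * m`!)); first by rewrite leq_pmulr ?fact_gt0.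
rewrite bin_ffact; elim: m => [|m IH]; first by rewrite ffactn0.
by rewrite ffactnSr expnSr leq_mul // leq_subr.
Qed.

Lemma final_bound (R : realType) (n d : nat) : (1 <= n)%N ->
  (('C(n, d))%:R : R) * (n%:R^-1) ^+ (d + 2) <= n%:R^-1.
Proof.
move=> n1.
have n0 : (0 : R) < n%:R by rewrite ltr0n.
apply: (@le_trans _ _ ((n%:R ^+ d) * (n%:R^-1) ^+ (d + 2))).
  apply: ler_wpM2r; first by rewrite exprn_ge0 // invr_ge0 ltW.
  by rewrite -natrX ler_nat bin_le_exp.
rewrite exprD mulrA -exprMn mulfV ?lt0r_neq0 // expr1n mul1r expr2.
apply: ler_piMr; [by rewrite invr_ge0 ltW | by rewrite invf_le1 // ler1n].
Qed.


Unset Implicit Arguments. Set Strict Implicit.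
Local Open Scope classical_set_scope.
Local Open Scope ring_scope.

Theorem lemma12 (R : realType) (d : nat) (c : R) :
  (2 <= d)%N -> 3 / 2 < c ->
  ((fun n : nat =>
     @probY R n d (c * ln (n%:R : R) / n%:R)
       (@no_mid_minimal_cocycle R n d)) : R^nat) @ \oo --> (1 : R).
Proof.
move=> d2 c32.
apply/cvgrPdist_le => eps eps0.
have c0 : 0 < c by lra.
have a0 : 0 < 2 * c / 3 - 1 by lra.
set K := 2 * c.
have K0 : 0 < K by rewrite /K; lra.
set M1 := K * ln K.
set M2 := expR ((d%:R + 2 + ln (4 * d%:R)) / (2 * c / 3 - 1)).
near=> n.
have n1 : (1 <= n)%N by near: n; exists 1%N.
have hM1 : M1 < n%:R by near: n; exact: nbhs_infty_gtr.
have hM2 : M2 < n%:R by near: n; exact: nbhs_infty_gtr.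
have hM3 : eps^-1 < n%:R by near: n; exact: nbhs_infty_gtr.
have n0 : (0 : R) < n%:R by rewrite ltr0n.
set L := ln (n%:R : R).
have L0 : 0 <= L by rewrite /L ln_ge0 // ler1n.
have p0 : 0 <= c * L / n%:R.
  by apply: mulr_ge0; [apply: mulr_ge0 => //; exact: ltW | rewrite invr_ge0; exact: ltW].
have p1 : c * L / n%:R <= 1.
  rewrite ler_pdivrMr // mul1r.
  have nK : 0 < n%:R / K by rewrite divr_gt0.
  have e : L = ln (n%:R / K) + ln K.
    by rewrite /L -lnM ?posrE // divfK // lt0r_neq0.
  have lt := ln_sublinear nK.
  have : c * L <= c * (n%:R / K + ln K) by rewrite e ler_wpM2l ?ltW //; lra.
  have -> : c * (n%:R / K + ln K) = n%:R / 2 + M1 / 2.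
    by rewrite /M1 /K; field; rewrite lt0r_neq0.
  lra.
have H3 : d%:R + 2 <= (2 * c / 3 - 1) * L - ln (4 * d%:R).
  have : ln M2 < L by rewrite /L ltr_ln ?posrE ?expR_gt0.
  rewrite /M2 expRK.
  rewrite ltr_pdivrMr // => h.
  lra.
have [lo hi] := andP (main_bound d2 n1 (introT andP (conj p0 p1)) H3).
have fb := @final_bound R n d n1.
have ne : n%:R^-1 <= eps.
  by rewrite -(invrK eps) lef_pV2 ?posrE ?invr_gt0 // ltW.
rewrite ger0_norm ?subr_ge0 //.
move: lo hi; rewrite -/L => lo hi.
lra.
Unshelve. all: by end_near.
Qed.
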